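(* In the $K$-tier network model described in the context with $W=0$, let tier $k$ use target SINR $\beta_k>0$ and rate $\mathcal R_k=\log_2(1+\beta_k)$, and define $$\mathcal F=\frac{\sum_{k=1}^K\lambda_k\mathcal A_k(1-\mathcal O_k^{int})\mathcal R_k}{\sum_{k=1}^K\lambda_k\mathcal A_k\big(\frac1\eta P_k+M_kP_C\big)+\sum_{k=1}^K\lambda_kP_S}$$ with constants $\eta\in(0,1]$, $P_C>0$, $P_S>0$. Regarded as a function of the access threshold $\epsilon$, $\lim_{\epsilon\to\infty}\mathcal F=0$.
   Context: Network model: $\mathcal K=\{1,\dots,K\}$. In $\mathbb R^2$, tier-$k$ BSs form a homogeneous PPP of intensity $\lambda_k>0$ and users a homogeneous PPP of intensity $\lambda_u>0$, all independent. Tier-$k$ BSs have transmit power $P_k>0$, $M_k\in\mathbb N$ antennas, bias $B_k>0$, path-loss exponent $\alpha_k>2$. $\Omega_k=P_kM_kB_k$, $\delta_k=2/\alpha_k$, $\Omega_{j,k}=\Omega_j/\Omega_k$, $\delta_{j,k}=\delta_j/\delta_k$. Access threshold $\epsilon>0$, $R_k=(\Omega_k/\epsilon)^{1/\alpha_k}$. Association: with $D_k$ the distance from a typical user to its nearest tier-$k$ BS, $\hat\rho_k=\Omega_kD_k^{-\alpha_k}$ if $D_k\le R_k$, else $0$; association with tier $k$ iff $\hat\rho_k>\hat\rho_j$ for all $j\ne k$, with probability $\mathcal T_k=\pi\lambda_k\int_0^{R_k^2}\exp(-\pi\sum_j\lambda_j\Omega_{j,k}^{\delta_j}r^{\delta_{j,k}})dr$.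 Activation probability of tier $j$: $\mathcal A_j=1-\exp\big(-\pi\lambda_u\int_0^{R_j^2}\exp(-\pi\sum_l\lambda_l\Omega_{l,j}^{\delta_l}r^{\delta_{l,j}})dr\big)$; active tier-$j$ BSs are modeled as a homogeneous PPP of intensity $\mathcal A_j\lambda_j$. Outage model: conditional on association with tier $k$, the serving distance $X_k$ has density $\frac{2\pi\lambda_k}{\mathcal T_k}x\exp(-\pi\sum_j\lambda_j\Omega_{j,k}^{\delta_j}x^{2\delta_{j,k}})$ on $(0,R_k]$; given $X_k$, interferers of tier $j$ are the points of independent homogeneous PPPs of intensity $\mathcal A_j\lambda_j$ outside the disk around the user of radius $\Omega_{j,k}^{1/\alpha_j}X_k^{\alpha_k/\alpha_j}$; $\|\mathbf h\|^2\sim\mathrm{Gamma}(M_k,1)$, an interferer of tier $j$ at distance $r$ contributes $P_jVr^{-\alpha_j}$ with $V\sim\mathrm{Exp}(1)$, all independent; $I_o$ is the total interference and $\mathcal O_k^{int}=\mathbb P\{P_k\|\mathbf h\|^2X_k^{-\alpha_k}/I_o<\beta_k\}$. $P_C$ is per-antenna circuit power, $P_S$ static power, $\eta$ amplifier efficiency. *)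

(* Defs.v *)
From HB Require Import structures.
From mathcomp Require Import all_boot all_order all_algebra.
From mathcomp Require Import all_classical all_reals all_analysis.
Set Implicit Arguments. Unset Strict Implicit. Unset Printing Implicit Defensive.
Import Order.TTheory GRing.Theory Num.Theory numFieldNormedType.Exports.
Local Open Scope classical_set_scope.
Local Open Scope ring_scope.

Section Model.
Variables (R : realType) (K : nat).
(* tier parameters: intensity lambda_k, power P_k, antennas M_k, bias B_k,
   path-loss exponent alpha_k *)
Variables (lam Pw Bi al : 'I_K -> R) (Mk : 'I_K -> nat).
Variable lamu : R.

Local Notation leb := (@lebesgue_measure R).

Definition Om (k : 'I_K) : R := Pw k * (Mk k)%:R * Bi k.
Definition dl (k : 'I_K) : R := 2 / al k.
Definition Rk (eps : R) (k : 'I_K) : R := (Om k / eps) `^ (1 / al k).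

Definition expo (k : 'I_K) (r : R) : R :=
  expR (- (pi * \sum_(j < K) lam j * (Om j / Om k) `^ (dl j) * r `^ (dl j / dl k))).

Definition Tk (eps : R) (k : 'I_K) : R :=
  pi * lam k * \int[leb]_(r in `[0, Rk eps k ^+ 2]) expo k r.

Definition Ak (eps : R) (j : 'I_K) : R :=
  1 - expR (- (pi * lamu * \int[leb]_(r in `[0, Rk eps j ^+ 2]) expo j r)).

Definition distdens (eps : R) (k : 'I_K) (x : R) : R :=
  2 * pi * lam k / Tk eps k * x *
  expR (- (pi * \sum_(j < K) lam j * (Om j / Om k) `^ (dl j) * x `^ (2 * (dl j / dl k)))).

(* exclusion radius of tier-j interferers given serving distance x *)
Definition exclr (k j : 'I_K) (x : R) : R :=
  (Om j / Om k) `^ (1 / al j) * x `^ (al k / al j).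

(* Laplace transform E[exp(-u I_o) | X_k = x] of the interference generated by
   independent homogeneous PPPs of intensity A_j lambda_j outside the disks of
   radius exclr k j x, each interferer contributing P_j V r^{-alpha_j},
   V ~ Exp(1) (probability generating functional of the PPP, polar coordinates). *)
Definition LapI (eps : R) (k : 'I_K) (u x : R) : R :=
  expR (- \sum_(j < K) 2 * pi * Ak eps j * lam j *
     \int[leb]_(r in `[exclr k j x, +oo[)
        (r * (1 - 1 / (1 + u * Pw j * r `^ (- al j))))).

(* The random objects of the outage model of tier k, for threshold eps,
   on a probability space (T, Pr): serving distance X, channel gain G = ||h||^2,
   total interference I. *)
Record outage_model (eps : R) (k : 'I_K) d (T : measurableType d)
    (Pr : probability T R) (X G I : T -> R) : Prop := {
  om_X : measurable_fun setT X;
  om_G : measurable_fun setT G;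
  om_I : measurable_fun setT I;
  (* ||h||^2 ~ Gamma(M_k, 1) (Erlang cdf) *)
  om_G_nonneg : Pr [set w | G w < 0] = 0%E;
  om_G_cdf : forall t : R, 0 <= t ->
    Pr [set w | G w <= t] =
      (1 - \sum_(m < Mk k) expR (- t) * t ^+ m / (m`!)%:R)%:E;
  om_I_nonneg : Pr [set w | I w < 0] = 0%E;
  (* joint law of (X_k, I_o): X_k has density distdens on (0, R_k] and,
     given X_k = x, I_o has Laplace transform LapI u x *)
  om_XI : forall (B : set R) (u : R), measurable B -> 0 <= u ->
    \int[Pr]_(w in X @^-1` B) expR (- (u * I w)) =
    \int[leb]_(x in B `&` `]0, Rk eps k]) (distdens eps k x * LapI eps k u x);
  om_indep : forall A B C : set R, measurable A -> measurable B -> measurable C ->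
    Pr (G @^-1` A `&` X @^-1` B `&` I @^-1` C) =
    (Pr (G @^-1` A) * Pr (X @^-1` B `&` I @^-1` C))%E
}.

Definition outage d (T : measurableType d) (Pr : probability T R)
    (X G I : T -> R) (beta : R) (k : 'I_K) : R :=
  fine (Pr [set w | Pw k * G w * X w `^ (- al k) / I w < beta]).

Definition EEff (eps : R) (O : 'I_K -> R) (beta : 'I_K -> R)
    (eta PC PS : R) : R :=
  (\sum_(k < K) lam k * Ak eps k * (1 - O k) * (ln (1 + beta k) / ln 2)) /
  (\sum_(k < K) lam k * Ak eps k * (Pw k / eta + (Mk k)%:R * PC) +
   \sum_(k < K) lam k * PS).

End Model.

(* Main.v *)
Require Import Defs.
From HB Require Import structures.
From mathcomp Require Import all_boot all_order all_algebra.
From mathcomp Require Import all_classical all_reals all_analysis.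
From mathcomp Require Import measurable_realfun.
Import Order.TTheory GRing.Theory Num.Theory numFieldNormedType.Exports.
Local Open Scope classical_set_scope.
Local Open Scope ring_scope.

Lemma measurable_inv_R (R : realType) : measurable_fun [set: R] (@GRing.inv R).
Proof.
have -> : [set: R] = [set 0] `|` [set x | x != 0].
  apply/seteqP; split => x //= _; case: (eqVneq x 0) => [->|]; by [left|right].
apply/measurable_funU => //.
  by apply: open_measurable; exact: open_neq.
split; first exact: measurable_fun_set1.
apply: open_continuous_measurable_fun; first exact: open_neq.
by move=> x; rewrite inE => /= hx; exact: inv_continuous.
Qed.

Lemma outage_bounds (R : realType) (K : nat)
    (lam Pw Bi al : 'I_K -> R) (Mk : 'I_K -> nat) (lamu : R) eps k
    d (T : measurableType d) (Pr : probability T R) (X G I : T -> R) beta :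
  outage_model lam Pw Bi al Mk lamu eps k Pr X G I ->
  0 <= outage Pw al Pr X G I beta k <= 1.
Proof.
case=> mX mG mI _ _ _ _ _.
set S := [set w | Pw k * G w * X w `^ (- al k) / I w < beta].
have mS : measurable S.
  have mf : measurable_fun setT (fun w => Pw k * G w * X w `^ (- al k) / I w).
    apply: measurable_funM; last exact: measurableT_comp (@measurable_inv_R R) mI.
    apply: measurable_funM; first exact: measurable_funM.
    exact: measurableT_comp (measurable_powR _) mX.
  have := measurable_fun_ltr mf (measurable_cst beta) measurableT (Y := [set true]) ltac:(by []).
  by rewrite setTI.
rewrite /outage -/S.
have h0 : (0 <= Pr S)%E by exact: measure_ge0.
have h1 : (Pr S <= 1)%E by exact: probability_le1.
have := h0; have := h1; case: (Pr S) => //= r; rewrite !lee_fin => ? ?.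
by apply/andP.
Qed.
Lemma inv_cvg_right (R : realType) (c : R) : 0 < c ->
  (fun eps : R => c / eps) @ +oo --> 0^'+.
Proof.
move=> c0.
have h0 : (fun eps : R => c / eps) @ +oo --> 0.
  rewrite -(mulr0 c); apply: cvgM; first exact: cvg_cst.
  have := (@gtr0_cvgV0 R R (pinfty_nbhs R) _ id).
  move=> [|_]; first by near=> x; near: x; exists 0; split => // x.
  by move=> /(_ cvg_id).
move=> A /= hA.
have hp : \forall x \near +oo, 0 < c / x.
  near=> x; apply: divr_gt0 => //; near: x; exists 0; split => // x.
have := h0 _ hA.
move: hp; apply: filterS2 => x hx hx2.
exact: hx2.
Unshelve. all: end_near.
Qed.
Lemma e0le (R : realType) (r : R) : 0 <= r -> (0 <= r%:E)%E. Proof. by rewrite lee_fin. Qed.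
Lemma e1le (R : realType) (r : R) : r <= 1 -> (r%:E <= 1)%E. Proof. by rewrite lee_fin. Qed.

Section S.
Variables (R : realType) (K : nat).
Variables (lam Pw Bi al : 'I_K -> R) (Mk : 'I_K -> nat).
Local Notation leb := (@lebesgue_measure R).

Lemma expo_meas k : measurable_fun setT (expo lam Pw Bi al Mk k).
Proof.
apply: measurableT_comp; first exact: measurable_expR.
apply: measurable_funN.
apply: measurable_funM; first exact: measurable_cst.
apply: measurable_sum => j.
apply: measurable_funM; first exact: measurable_cst.
exact: measurable_powR.
Qed.

Lemma J_bound k (a : R) : 0 <= a -> (forall j, 0 <= lam j) ->
  0 <= \int[leb]_(r in `[0, a]) expo lam Pw Bi al Mk k r <= a.
Proof.
move=> a0 hl; apply/andP; split.
  by apply: Rintegral_ge0 => x _; exact: expR_ge0.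
rewrite /Rintegral.
set D := (`[0, a]%classic : set R).
have mD : measurable D by exact: measurable_itv.
have h : (\int[leb]_(r in D) (expo lam Pw Bi al Mk k r)%:E <= a%:E)%E.
  apply: (@le_trans _ _ (\int[leb]_(r in D) (cst 1%:E) r)%E).
    apply: ge0_le_integral => //.
    - by move=> x _; apply: e0le; exact: expR_ge0.
    - apply/measurable_EFinP; apply: measurable_funS (expo_meas k) => //.
    - move=> x _ /=; apply: e1le; rewrite /expo -expR0 ler_expR oppr_le0 mulr_ge0 ?pi_ge0 //.
      by apply: sumr_ge0 => j _; rewrite mulr_ge0 ?powR_ge0 // mulr_ge0 ?powR_ge0.
  rewrite integral_cst // mul1e.
  have E := @lebesgue_measure_itv R `[0, a]%R.
  have E' : (leb D <= a%:E)%E.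
    rewrite /D E /=; case: ifP => _; last exact: e0le.
    by rewrite sube0.
  exact: E'.
have h0 : (0 <= \int[leb]_(r in D) (expo lam Pw Bi al Mk k r)%:E)%E.
  by apply: integral_ge0 => x _; apply: e0le; exact: expR_ge0.
move: h h0; case: (\int[leb]_(r in D) _)%E => //= r.
Qed.
End S.

Theorem proposition2 (R : realType) (K : nat)
    (lam Pw Bi al : 'I_K -> R) (Mk : 'I_K -> nat) (lamu : R)
    (beta : 'I_K -> R) (eta PC PS : R)
    (d : measure_display) (T : measurableType d)
    (Pr : R -> 'I_K -> probability T R) (X G I : R -> 'I_K -> T -> R) :
  (0 < K)%N ->
  (forall k, 0 < lam k) -> (forall k, 0 < Pw k) -> (forall k, (0 < Mk k)%N) ->
  (forall k, 0 < Bi k) -> (forall k, 2 < al k) -> 0 < lamu ->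
  (forall k, 0 < beta k) -> 0 < eta <= 1 -> 0 < PC -> 0 < PS ->
  (forall eps k, 0 < eps ->
     outage_model lam Pw Bi al Mk lamu eps k (Pr eps k)
       (X eps k) (G eps k) (I eps k)) ->
  EEff lam Pw Bi al Mk lamu eps
    (fun k => outage Pw al (Pr eps k) (X eps k) (G eps k) (I eps k) (beta k) k)
    beta eta PC PS
  @[eps --> +oo] --> 0.
Proof.
move=> K0 hl hP hM hB ha hu hb /andP[he0 he1] hPC hPS hmod.
have hOm k : 0 < Om Pw Bi Mk k.
  by rewrite /Om !mulr_gt0 // ltr0n.
have hal k : 0 < al k by apply: lt_trans (ha k).
have hRk k : Rk Pw Bi al Mk eps k @[eps --> +oo] --> 0.
  have hp : 0 < 1 / al k by rewrite divr_gt0.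
  have h := cvg_comp _ _ (@inv_cvg_right _ _ (hOm k)) (powR_cvg0 hp).
  exact: h.
have hRk2 k : Rk Pw Bi al Mk eps k ^+ 2 @[eps --> +oo] --> 0.
  under eq_fun do rewrite expr2.
  by rewrite -(mulr0 0); apply: cvgM.
have hJ k : \int[lebesgue_measure]_(r in `[0, Rk Pw Bi al Mk eps k ^+ 2])
    expo lam Pw Bi al Mk k r @[eps --> +oo] --> 0.
  apply: (@squeeze_cvgr _ _ _ _ (cst 0) _ _ _ _ (cvg_cst _) (hRk2 k)).
  near=> eps; apply: J_bound; first by rewrite sqr_ge0.
  by move=> j; apply: ltW.
have hA0 eps k : 0 <= Ak lam Pw Bi al Mk lamu eps k.
  rewrite /Ak subr_ge0 -expR0 ler_expR oppr_le0; apply: mulr_ge0.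
    by rewrite mulr_ge0 ?pi_ge0 ?ltW.
  by apply: Rintegral_ge0 => x _; exact: expR_ge0.
have hA k : Ak lam Pw Bi al Mk lamu eps k @[eps --> +oo] --> 0.
  have -> : (0:R) = 1 - expR (- (pi * lamu * 0)) by rewrite mulr0 oppr0 expR0 subrr.
  apply: cvgB; first exact: cvg_cst.
  have h : - (pi * lamu * \int[lebesgue_measure]_(r in `[0, Rk Pw Bi al Mk eps k ^+ 2])
    expo lam Pw Bi al Mk k r) @[eps --> +oo] --> - (pi * lamu * 0).
    apply: cvgN; apply: cvgM; [exact: cvg_cst | exact: hJ].
  exact: (cvg_comp _ _ h (@continuous_expR R _)).
have hpos : \forall eps \near +oo, 0 < eps :> R.
  by exists 0; split => // x.
set O := fun eps k => outage Pw al (Pr eps k) (X eps k) (G eps k) (I eps k) (beta k) k.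
have hO eps k : 0 < eps -> 0 <= O eps k <= 1.
  by move=> e0; apply: outage_bounds; exact: hmod.
set c := fun k => ln (1 + beta k) / ln 2.
have hc k : 0 <= c k.
  rewrite /c divr_ge0 // ln_ge0 //; last by rewrite ler1n.
  by rewrite lerDl ltW.
have hN : \sum_(k < K) lam k * Ak lam Pw Bi al Mk lamu eps k * (1 - O eps k) * c k
    @[eps --> +oo] --> \sum_(k < K) (0:R).
  apply: cvg_big; first exact: add_continuous.
  move=> k _.
  have hh : lam k * Ak lam Pw Bi al Mk lamu eps k * c k @[eps --> +oo] --> lam k * 0 * c k.
    apply: cvgM; last exact: cvg_cst.
    apply: cvgM; [exact: cvg_cst | exact: hA].
  rewrite mulr0 mul0r in hh.
  apply: (@squeeze_cvgr _ _ _ _ (cst 0) _ _ _ _ (cvg_cst _) hh).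
  move: hpos; apply: filterS => eps e0.
  have /andP[ho0 ho1] := hO eps k e0.
  have hlA : 0 <= lam k * Ak lam Pw Bi al Mk lamu eps k by apply: mulr_ge0; [exact: ltW | exact: hA0].
  apply/andP; split.
    by rewrite /= mulr_ge0 // mulr_ge0 // subr_ge0.
  apply: ler_wpM2r => //; apply: ler_piMr => //.
  by rewrite lerBlDr lerDl.
rewrite big1 // in hN.
set D0 := \sum_(k < K) lam k * 0 * (Pw k / eta + (Mk k)%:R * PC) + \sum_(k < K) lam k * PS.
have hD : \sum_(k < K) lam k * Ak lam Pw Bi al Mk lamu eps k * (Pw k / eta + (Mk k)%:R * PC)
     + \sum_(k < K) lam k * PS @[eps --> +oo] --> D0.
  apply: cvgD; last exact: cvg_cst.
  apply: cvg_big; first exact: add_continuous.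
  move=> k _; apply: cvgM; last exact: cvg_cst.
  apply: cvgM; [exact: cvg_cst | exact: hA].
have hD0 : D0 != 0.
  rewrite /D0 big1 ?add0r; last by move=> k _; rewrite mulr0 mul0r.
  apply: lt0r_neq0.
  pose k0 : 'I_K := Ordinal K0.
  rewrite (bigD1 k0) //=.
  apply: (@lt_le_trans _ _ (lam k0 * PS)); first exact: mulr_gt0.
  by rewrite lerDl sumr_ge0 // => k _; rewrite mulr_ge0 ?ltW.
rewrite /EEff.
rewrite -[X in _ --> X](mul0r D0^-1).
apply: cvgM; first exact: hN.
exact: cvgV.
Unshelve. all: end_near.
Qed.
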